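(* For all non-negative integers $n$ and $p$, $$\sum_{k=1}^n\binom{2k}{k}^{-1}\binom{2(k+p)}{k+p}\binom{k+p}{k}\left(O_{k+p}-O_k\right)=\frac14\binom{2n}{n}^{-1}\binom{2(n+p+1)}{n+p+1}\binom{n+p+1}{n}\left(O_{n+p+1}-O_n\right)-\frac14\binom{2(p+1)}{p+1}O_{p+1}.$$
   Context: The odd harmonic numbers are $O_n=\sum_{k=1}^n\frac{1}{2k-1}$, $O_0=0$. *)

(* Defs.v *)
From mathcomp Require Import all_boot all_order all_algebra.
Set Implicit Arguments. Unset Strict Implicit. Unset Printing Implicit Defensive.
Import Order.TTheory GRing.Theory Num.Theory.
Local Open Scope ring_scope.

Definition oddH (n : nat) : rat :=
  \sum_(1 <= k < n.+1) ((2 * k - 1)%N%:R)^-1.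

(* Main.v *)
Require Import Defs.
From mathcomp Require Import all_boot all_order all_algebra.
From mathcomp Require Import zify ring lra.
Import Order.TTheory GRing.Theory Num.Theory.
Local Open Scope ring_scope.

Lemma cenN k : ('C((2*k).+2, k.+1) * k.+1 = 2 * (2*k).+1 * 'C(2*k, k))%N.
Proof.
have h1 := mul_bin_diag (2*k).+2 k.
have h2 := mul_bin_diag (2*k).+1 k.
have h3 : 'C((2*k).+1, k.+1) = 'C((2*k).+1, k).
  by rewrite -bin_sub; [congr binomial; lia | lia].
simpl in h1, h2. rewrite h3 in h2.
nia.
Qed.

Lemma cen k : ('C((2*k).+2, k.+1))%:R = ('C(2*k, k))%:R * (2 * (2*k).+1)%:R / (k.+1)%:R :> rat.
Proof.
apply: (@mulIf _ (k.+1)%:R); first by rewrite pnatr_eq0.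
rewrite mulfVK ?pnatr_eq0 // -!natrM cenN; congr _%:R; lia.
Qed.

Lemma b1 q n : ('C(q.+2, n.+1))%:R = ('C(q.+1, n))%:R * (q.+2)%:R / (n.+1)%:R :> rat.
Proof.
apply: (@mulIf _ (n.+1)%:R); first by rewrite pnatr_eq0.
have h := mul_bin_diag q.+2 n. simpl in h.
rewrite mulfVK ?pnatr_eq0 // -!natrM mulnC -h; congr _%:R; lia.
Qed.

Lemma b2 n p : ('C((n+p).+1, n.+1))%:R = ('C((n+p).+1, n))%:R * (p.+1)%:R / (n.+1)%:R :> rat.
Proof.
apply: (@mulIf _ (n.+1)%:R); first by rewrite pnatr_eq0.
have h := mul_bin_left (n+p).+1 n.
have e : ((n + p).+1 - n = p.+1)%N by lia.
rewrite e in h.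
rewrite mulfVK ?pnatr_eq0 // -!natrM mulnC h; congr _%:R; lia.
Qed.

Lemma oddS k : oddH k.+1 = oddH k + ((2*k).+1)%:R^-1.
Proof.
rewrite /oddH big_nat_recr //=. congr (_ + _ ^-1). congr (_%:R). lia.
Qed.

Lemma mul2S k : (2 * k.+1 = (2*k).+2)%N.
Proof. lia. Qed.

Lemma c1 k : ((2*k).+1)%:R = 2 * k%:R + 1 :> rat.
Proof. by rewrite -addn1 natrD natrM. Qed.
Lemma c2 k : (2 * (2*k).+1)%:R = 2 * (2 * k%:R + 1) :> rat.
Proof. by rewrite natrM c1. Qed.
Lemma c3 k : ((2*k).+3)%:R = 2 * k%:R + 3 :> rat.
Proof. by rewrite -addn3 natrD natrM. Qed.
Lemma c4 k : (k.+1)%:R = k%:R + 1 :> rat.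
Proof. by rewrite -addn1 natrD. Qed.
Lemma c5 k : (k.+2)%:R = k%:R + 2 :> rat.
Proof. by rewrite -addn2 natrD. Qed.

Lemma c6 k : (2 * (2*k).+3)%:R = 2 * (2 * k%:R + 3) :> rat.
Proof. by rewrite natrM c3. Qed.

Theorem theorem16 (n p : nat) :
  \sum_(1 <= k < n.+1)
     (('C(2 * k, k))%:R^-1 * ('C(2 * (k + p), k + p))%:R * ('C(k + p, k))%:R
        * (oddH (k + p) - oddH k) : rat)
  = 1 / 4 * ('C(2 * n, n))%:R^-1 * ('C(2 * (n + p + 1), n + p + 1))%:R
        * ('C(n + p + 1, n))%:R * (oddH (n + p + 1) - oddH n)
    - 1 / 4 * ('C(2 * (p + 1), p + 1))%:R * oddH (p + 1).
Proof.
elim: n => [|n IH].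
  have o0 : oddH 0 = 0 by rewrite /oddH big_geq.
  rewrite big_geq // !add0n muln0 !bin0 o0 invr1; ring.
rewrite big_nat_recr //= IH.
have e1 : (n.+1 + p = (n+p).+1)%N by lia.
have e2 : (n + p + 1 = (n+p).+1)%N by lia.
have e3 : (n.+1 + p + 1 = (n+p).+2)%N by lia.
rewrite e1 e2 e3 (mul2S n) (mul2S (n+p).+1) (cen n) (cen (n+p).+1) (mul2S (n+p)) (cen (n+p)) (b1 (n+p) n) b2 !oddS (mul2S (n+p)).
have nz1 : ('C(2*n, n))%:R != 0 :> rat by rewrite pnatr_eq0 -lt0n bin_gt0; lia.
have nz2 : ('C((n+p).+1, n))%:R != 0 :> rat by rewrite pnatr_eq0 -lt0n bin_gt0; lia.
have nz3 : ('C(2*(n+p), n+p))%:R != 0 :> rat by rewrite pnatr_eq0 -lt0n bin_gt0; lia.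
move: nz1 nz2 nz3.
set a := ('C(2*n, n))%:R. set b := ('C((n+p).+1, n))%:R.
set c := ('C(2*(n+p), n+p))%:R.
set d := ('C(2 * (p + 1), p + 1))%:R.
move=> nz1 nz2 nz3.
rewrite !c2 !c6 !c3 !c1 (c4 (n+p)) (c4 n) (c4 p) (c5 (n+p)) natrD.
have hn : 0 <= n%:R :> rat by apply: ler0n.
have hp : 0 <= p%:R :> rat by apply: ler0n.
move: hn hp. generalize (n%:R : rat) (p%:R : rat) => N P hN hP.
field.
rewrite nz1 andbT.
by apply/and5P; split; rewrite lt0r_neq0 //; lra.

Qed.
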